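(* Let $S$ be a nonelementary hyperbolic surface with at least one cusp. Then every vector $u\in T^1S$ whose forward geodesic orbit $\{g_tu: t\ge0\}$ is dense in the nonwandering set $\mathrm{NW}(g_t)$ of the geodesic flow is cusp-recurrent.
   Context: $S=\Gamma\backslash\mathbb H$ with $\Gamma$ a torsion-free Fuchsian group; $g_t$ is the geodesic flow on $T^1S$, and for $u\in T^1S$, $u(t)$ denotes the basepoint of $g_tu$. $\mathrm{NW}(g_t)$ is the set of nonwandering vectors of $g_t$. A closed horocycle in $S$ is the projection of a horocycle in $\mathbb H$ centered at the fixed point of a parabolic element of $\Gamma$. A vector $u\in T^1S$ is cusp-recurrent if the geodesic ray $u(\mathbb R^+)$ does not escape to infinity through a cusp (equivalently, for a lift $\tilde u$, $\tilde u(+\infty)$ is not fixed by a parabolic element of $\Gamma$) and there exist closed horocycles $H_n$ in $S$ with lengths tending to $0$ and times $t_n\ge0$ with $u(t_n)\in H_n$. *)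

(* Defs.v *)
(* Model: T^1 H is identified with PSL(2,R) via g |-> the unit vector at g.i
   pointing along g.(i e^t); we work with SL(2,R) matrices and represent a
   Fuchsian group Gamma < PSL(2,R) by its full preimage in SL(2,R) (so -I is in
   Gamma).  Then T^1 S = Gamma \ SL(2,R), the geodesic flow is right
   multiplication by a_t = diag(e^{t/2}, e^{-t/2}), the basepoint of g is g.i
   and the forward endpoint g(+oo) is g.oo = [a : c]. *)
From Stdlib Require Import Reals List.
Open Scope R_scope.

Record mat := Mat { ma : R; mb : R; mc : R; md : R }.

Definition mmul (g h : mat) : mat :=
  Mat (ma g * ma h + mb g * mc h) (ma g * mb h + mb g * md h)
      (mc g * ma h + md g * mc h) (mc g * mb h + md g * md h).

Definition mdet (g : mat) : R := ma g * md g - mb g * mc g.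
Definition mI : mat := Mat 1 0 0 1.
Definition mnegI : mat := Mat (-1) 0 0 (-1).
(* inverse of a determinant-one matrix *)
Definition minv (g : mat) : mat := Mat (md g) (- mb g) (- mc g) (ma g).
Fixpoint mpow (g : mat) (n : nat) : mat :=
  match n with O => mI | S k => mmul g (mpow g k) end.

Definition SL2 (g : mat) : Prop := mdet g = 1.

Definition mdist (g h : mat) : R :=
  Rmax (Rmax (Rabs (ma g - ma h)) (Rabs (mb g - mb h)))
       (Rmax (Rabs (mc g - mc h)) (Rabs (md g - md h))).

Definition a_t (t : R) : mat := Mat (exp (t / 2)) 0 0 (exp (- t / 2)).
Definition gflow (t : R) (g : mat) : mat := mmul g (a_t t).

Definition transl (s : R) : mat := Mat 1 s 0 1.

(* imaginary part of g . i for g in SL(2,R) *)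
Definition im_at_i (g : mat) : R := / (mc g ^ 2 + md g ^ 2).

Definition parabolic (p : mat) : Prop :=
  p <> mI /\ p <> mnegI /\ (ma p + md p) ^ 2 = 4.

(* p fixes the boundary point [x : y] of P^1(R) *)
Definition fixes_bd (p : mat) (x y : R) : Prop :=
  (ma p * x + mb p * y) * y - (mc p * x + md p * y) * x = 0.

(* points of the closure of H: interior x + iy, or boundary [p : q] *)
Inductive hpt := Inn (x y : R) | Bd (p q : R).

Definition valid_hpt (z : hpt) : Prop :=
  match z with Inn _ y => 0 < y | Bd p q => ~ (p = 0 /\ q = 0) end.

Definition same_hpt (z w : hpt) : Prop :=
  match z, w with
  | Inn x y, Inn x' y' => x = x' /\ y = y'
  | Bd p q, Bd p' q' => p * q' = p' * q
  | _, _ => False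
  end.

(* Moebius action of a determinant-one matrix on the closure of H *)
Definition act (g : mat) (z : hpt) : hpt :=
  match z with
  | Inn x y =>
      let n := (mc g * x + md g) ^ 2 + (mc g * y) ^ 2 in
      Inn (((ma g * x + mb g) * (mc g * x + md g) + ma g * mc g * y ^ 2) / n)
          (y / n)
  | Bd p q => Bd (ma g * p + mb g * q) (mc g * p + md g * q)
  end.

Record torsion_free_fuchsian (Gam : mat -> Prop) : Prop := {
  fu_SL2 : forall g, Gam g -> SL2 g;
  fu_one : Gam mI;
  fu_negI : Gam mnegI;
  fu_mul : forall g h, Gam g -> Gam h -> Gam (mmul g h);
  fu_inv : forall g, Gam g -> Gam (minv g);
  fu_discrete : exists eps, 0 < eps /\
      forall g, Gam g -> mdist g mI < eps -> g = mI;
  fu_torsion_free : forall g n, Gam g -> (0 < n)%nat ->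
      (mpow g n = mI \/ mpow g n = mnegI) -> g = mI \/ g = mnegI
}.

Definition elementary (Gam : mat -> Prop) : Prop :=
  exists s : list hpt, s <> nil /\ Forall valid_hpt s /\
    forall g z, Gam g -> In z s -> exists w, In w s /\ same_hpt (act g z) w.

Definition has_cusp (Gam : mat -> Prop) : Prop :=
  exists p, Gam p /\ parabolic p.

Definition nonwandering (Gam : mat -> Prop) (v : mat) : Prop :=
  SL2 v /\
  forall eps T, 0 < eps -> exists t w g, T <= t /\ Gam g /\ SL2 w /\
    mdist w v < eps /\ mdist (mmul g (gflow t w)) v < eps.

Definition forward_orbit_dense_in_NW (Gam : mat -> Prop) (u : mat) : Prop :=
  (forall t, 0 <= t -> nonwandering Gam (gflow t u)) /\
  forall w, nonwandering Gam w -> forall eps, 0 < eps ->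
    exists t g, 0 <= t /\ Gam g /\ mdist (mmul g (gflow t u)) w < eps.

(* A closed horocycle in S: projection of the horocycle
   { g.z : Im z = y } centered at g.oo, where g (transl tau) g^-1 generates
   the parabolic stabilizer of g.oo in Gamma (tau > 0 minimal). *)
Definition closed_horocycle (Gam : mat -> Prop) (g : mat) (y tau : R) : Prop :=
  SL2 g /\ 0 < y /\ 0 < tau /\
  Gam (mmul g (mmul (transl tau) (minv g))) /\
  forall s, 0 < s < tau -> ~ Gam (mmul g (mmul (transl s) (minv g))).

Definition horocycle_length (y tau : R) : R := tau / y.

Definition on_horocycle (Gam : mat -> Prop) (g : mat) (y : R) (h : mat) : Prop :=
  exists gam, Gam gam /\ im_at_i (mmul (minv g) (mmul gam h)) = y.

Definition cusp_recurrent (Gam : mat -> Prop) (u : mat) : Prop :=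
  (~ exists p, Gam p /\ parabolic p /\ fixes_bd p (ma u) (mc u)) /\
  exists (g : nat -> mat) (y tau t : nat -> R),
    (forall n, closed_horocycle Gam (g n) (y n) (tau n) /\ 0 <= t n /\
       on_horocycle Gam (g n) (y n) (gflow (t n) u)) /\
    Un_cv (fun n => horocycle_length (y n) (tau n)) 0.

(* Main.v *)
Require Import Defs.
From Stdlib Require Import Reals Lra Lia Psatz ClassicalEpsilon.
Open Scope R_scope.


Lemma mat_eta (g : mat) : g = Mat (ma g) (mb g) (mc g) (md g).
Proof. destruct g; reflexivity. Qed.

Ltac dmat := repeat match goal with g : mat |- _ => destruct g end; unfold mmul, minv, mdet, mI, mnegI, transl, a_t, gflow in *; simpl in *.

Lemma mmul_assoc g h k : mmul (mmul g h) k = mmul g (mmul h k).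
Proof. dmat; f_equal; ring. Qed.
Lemma mdet_mul g h : mdet (mmul g h) = mdet g * mdet h.
Proof. dmat; ring. Qed.
Lemma minv_l g : SL2 g -> mmul (minv g) g = mI.
Proof. unfold SL2; dmat; intro H; f_equal; lra. Qed.
Lemma minv_r g : SL2 g -> mmul g (minv g) = mI.
Proof. unfold SL2; dmat; intro H; f_equal; lra. Qed.
Lemma mmul_I_l g : mmul mI g = g.
Proof. dmat; f_equal; ring. Qed.
Lemma mmul_I_r g : mmul g mI = g.
Proof. dmat; f_equal; ring. Qed.
Lemma minv_mul g h : minv (mmul g h) = mmul (minv h) (minv g).
Proof. dmat; f_equal; ring. Qed.
Lemma minv_minv g : minv (minv g) = g.
Proof. dmat; f_equal; ring. Qed.
Lemma mdet_minv g : mdet (minv g) = mdet g.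
Proof. dmat; ring. Qed.
Lemma SL2_mul g h : SL2 g -> SL2 h -> SL2 (mmul g h).
Proof. unfold SL2; intros; rewrite mdet_mul; nra. Qed.
Lemma SL2_inv g : SL2 g -> SL2 (minv g).
Proof. unfold SL2; intros; rewrite mdet_minv; auto. Qed.
Lemma a_t_add s t : a_t (s + t) = mmul (a_t s) (a_t t).
Proof.
  unfold a_t, mmul; simpl; f_equal; try ring;
  rewrite ?Rmult_0_r, ?Rmult_0_l, ?Rplus_0_r, ?Rplus_0_l, <- exp_plus; f_equal; field.
Qed.
Lemma SL2_a_t t : SL2 (a_t t).
Proof. unfold SL2, mdet, a_t; simpl. rewrite Rmult_0_r, Rminus_0_r, <- exp_plus.
  replace (t/2 + -t/2) with 0 by field. apply exp_0. Qed.
Lemma SL2_transl s : SL2 (transl s).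
Proof. unfold SL2, mdet, transl; simpl; ring. Qed.
Lemma SL2_I : SL2 mI.
Proof. unfold SL2, mdet, mI; simpl; ring. Qed.


Lemma mdist_lt X Y e : Rabs (ma X - ma Y) < e -> Rabs (mb X - mb Y) < e ->
  Rabs (mc X - mc Y) < e -> Rabs (md X - md Y) < e -> mdist X Y < e.
Proof. intros; unfold mdist; repeat apply Rmax_lub_lt; auto. Qed.

Lemma mdist_comp X Y e : mdist X Y < e -> Rabs (ma X - ma Y) < e /\ Rabs (mb X - mb Y) < e /\
  Rabs (mc X - mc Y) < e /\ Rabs (md X - md Y) < e.
Proof.
  unfold mdist; intro H.
  pose proof (Rmax_l (Rmax (Rabs (ma X - ma Y)) (Rabs (mb X - mb Y))) (Rmax (Rabs (mc X - mc Y)) (Rabs (md X - md Y)))).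
  pose proof (Rmax_r (Rmax (Rabs (ma X - ma Y)) (Rabs (mb X - mb Y))) (Rmax (Rabs (mc X - mc Y)) (Rabs (md X - md Y)))).
  pose proof (Rmax_l (Rabs (ma X - ma Y)) (Rabs (mb X - mb Y))).
  pose proof (Rmax_r (Rabs (ma X - ma Y)) (Rabs (mb X - mb Y))).
  pose proof (Rmax_l (Rabs (mc X - mc Y)) (Rabs (md X - md Y))).
  pose proof (Rmax_r (Rabs (mc X - mc Y)) (Rabs (md X - md Y))).
  repeat split; lra.
Qed.

Lemma abs_mul_le x y B d : Rabs x <= B -> Rabs y <= d -> Rabs (x * y) <= B * d.
Proof. intros; rewrite Rabs_mult; apply Rmult_le_compat; auto using Rabs_pos. Qed.

Lemma abs_lin4 c1 c2 c3 c4 e1 e2 e3 e4 B d :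
  Rabs c1 <= B -> Rabs c2 <= B -> Rabs c3 <= B -> Rabs c4 <= B ->
  Rabs e1 <= d -> Rabs e2 <= d -> Rabs e3 <= d -> Rabs e4 <= d ->
  Rabs (c1*e1 + c2*e2 + c3*e3 + c4*e4) <= 4*B*d.
Proof.
  intros.
  pose proof (abs_mul_le c1 e1 B d H H3). pose proof (abs_mul_le c2 e2 B d H0 H4).
  pose proof (abs_mul_le c3 e3 B d H1 H5). pose proof (abs_mul_le c4 e4 B d H2 H6).
  pose proof (Rabs_triang (c1*e1 + c2*e2 + c3*e3) (c4*e4)).
  pose proof (Rabs_triang (c1*e1 + c2*e2) (c3*e3)).
  pose proof (Rabs_triang (c1*e1) (c2*e2)). lra.
Qed.

Lemma abs_prod_le x y M : Rabs x <= M -> Rabs y <= M -> Rabs (x*y) <= M*M.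
Proof. intros; apply abs_mul_le; auto. Qed.

Definition Gp (Gam : mat -> Prop) g X := Gam (mmul g (mmul X (minv g))).

Section Frame.
Variable Gam : mat -> Prop.
Hypothesis HG : torsion_free_fuchsian Gam.
Variable g : mat.
Hypothesis Hg : SL2 g.

Lemma conj_mul X Y : mmul g (mmul (mmul X Y) (minv g)) =
  mmul (mmul g (mmul X (minv g))) (mmul g (mmul Y (minv g))).
Proof.
  rewrite !mmul_assoc. f_equal. f_equal.
  rewrite <- (mmul_assoc (minv g) g), minv_l, mmul_I_l by auto. reflexivity.
Qed.

Lemma conj_inv X : mmul g (mmul (minv X) (minv g)) = minv (mmul g (mmul X (minv g))).
Proof. rewrite !minv_mul, minv_minv, mmul_assoc; reflexivity. Qed.

Lemma Gp_SL2 X : Gp Gam g X -> SL2 X.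
Proof.
  intro H. apply (fu_SL2 _ HG) in H. unfold SL2 in *.
  rewrite !mdet_mul, mdet_minv in H. unfold SL2 in Hg. rewrite Hg in H. lra.
Qed.

Lemma Gp_mul X Y : Gp Gam g X -> Gp Gam g Y -> Gp Gam g (mmul X Y).
Proof. unfold Gp; intros; rewrite conj_mul; apply (fu_mul _ HG); auto. Qed.

Lemma Gp_inv X : Gp Gam g X -> Gp Gam g (minv X).
Proof. unfold Gp; intros; rewrite conj_inv; apply (fu_inv _ HG); auto. Qed.

Lemma Gp_negI : Gp Gam g mnegI.
Proof.
  unfold Gp. replace (mmul g (mmul mnegI (minv g))) with mnegI. apply (fu_negI _ HG).
  unfold SL2 in Hg; destruct g as [p q r s]; unfold mmul, minv, mnegI, mdet in *; simpl in *; f_equal; lra.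
Qed.

Lemma Gp_of gam : Gam gam -> Gp Gam g (mmul (minv g) (mmul gam g)).
Proof.
  unfold Gp; intro H. rewrite <- !mmul_assoc, minv_r, mmul_I_l by auto.
  rewrite mmul_assoc, minv_r, mmul_I_r by auto. auto.
Qed.

Lemma Gp_back X : Gp Gam g X -> Gam (mmul g (mmul X (minv g))).
Proof. auto. Qed.

Lemma Gp_discrete : exists d, 0 < d /\ forall X, Gp Gam g X -> mdist X mI < d -> X = mI.
Proof.
  destruct (fu_discrete _ HG) as [eps [He Hd]].
  set (M := Rabs (ma g) + Rabs (mb g) + Rabs (mc g) + Rabs (md g)).
  assert (HM: 0 <= M) by (unfold M; pose proof (Rabs_pos (ma g)); pose proof (Rabs_pos (mb g));
    pose proof (Rabs_pos (mc g)); pose proof (Rabs_pos (md g)); lra).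
  assert (Hb : forall x y, Rabs x <= M -> Rabs y <= M -> Rabs (x*y) <= M*M) by (intros; apply abs_prod_le; auto).
  assert (B1 : Rabs (ma g) <= M) by (unfold M; pose proof (Rabs_pos (ma g)); pose proof (Rabs_pos (mb g));
    pose proof (Rabs_pos (mc g)); pose proof (Rabs_pos (md g)); lra).
  assert (B2 : Rabs (mb g) <= M) by (unfold M; pose proof (Rabs_pos (ma g)); pose proof (Rabs_pos (mb g));
    pose proof (Rabs_pos (mc g)); pose proof (Rabs_pos (md g)); lra).
  assert (B3 : Rabs (mc g) <= M) by (unfold M; pose proof (Rabs_pos (ma g)); pose proof (Rabs_pos (mb g));
    pose proof (Rabs_pos (mc g)); pose proof (Rabs_pos (md g)); lra).
  assert (B4 : Rabs (md g) <= M) by (unfold M; pose proof (Rabs_pos (ma g)); pose proof (Rabs_pos (mb g));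
    pose proof (Rabs_pos (mc g)); pose proof (Rabs_pos (md g)); lra).
  assert (BN : forall x, Rabs x <= M -> Rabs (- x) <= M) by (intros; rewrite Rabs_Ropp; auto).
  exists (eps / (4*(M*M) + 1)). split.
  { apply Rdiv_lt_0_compat; nra. }
  intros X HX Hdist.
  apply mdist_comp in Hdist. unfold mI in Hdist; simpl in Hdist.
  destruct Hdist as [E1 [E2 [E3 E4]]].
  set (d := eps / (4*(M*M) + 1)) in *.
  assert (Hd4 : 4*(M*M)*d < eps).
  { assert (Hdpos: 0 < d) by (unfold d; apply Rdiv_lt_0_compat; nra).
    assert (Hdd: d * (4*(M*M)+1) = eps) by (unfold d; field; nra).
    lra. }
  assert (E1' : Rabs (ma X - 1) <= d) by lra.
  assert (E2' : Rabs (mb X) <= d) by (rewrite Rminus_0_r in E2; lra).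
  assert (E3' : Rabs (mc X) <= d) by (rewrite Rminus_0_r in E3; lra).
  assert (E4' : Rabs (md X - 1) <= d) by lra.
  assert (Hgam : mmul g (mmul X (minv g)) = mI).
  { apply Hd. apply HX. unfold SL2 in Hg.
    destruct g as [p q r s]; destruct X as [x1 x2 x3 x4]; unfold mmul, minv, mI, mdet in *; simpl in *.
    set (e1 := x1 - 1) in *. set (e4 := x4 - 1) in *.
    apply mdist_lt; simpl.
    - replace (p * (x1 * s + x2 * - r) + q * (x3 * s + x4 * - r) - 1) with
        ((p*s)*e1 + (-(p*r))*x2 + (q*s)*x3 + (-(q*r))*e4) by (unfold e1, e4; lra).
      apply Rle_lt_trans with (4*(M*M)*d); [apply abs_lin4; try rewrite Rabs_Ropp; try apply Hb; auto | lra].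
    - replace (p * (x1 * - q + x2 * p) + q * (x3 * - q + x4 * p) - 0) with
        ((-(p*q))*e1 + (p*p)*x2 + (-(q*q))*x3 + (q*p)*e4) by (unfold e1, e4; ring).
      apply Rle_lt_trans with (4*(M*M)*d); [apply abs_lin4; try rewrite Rabs_Ropp; try apply Hb; auto | lra].
    - replace (r * (x1 * s + x2 * - r) + s * (x3 * s + x4 * - r) - 0) with
        ((r*s)*e1 + (-(r*r))*x2 + (s*s)*x3 + (-(s*r))*e4) by (unfold e1, e4; ring).
      apply Rle_lt_trans with (4*(M*M)*d); [apply abs_lin4; try rewrite Rabs_Ropp; try apply Hb; auto | lra].
    - replace (r * (x1 * - q + x2 * p) + s * (x3 * - q + x4 * p) - 1) with
        ((-(r*q))*e1 + (r*p)*x2 + (-(s*q))*x3 + (s*p)*e4) by (unfold e1, e4; lra).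
      apply Rle_lt_trans with (4*(M*M)*d); [apply abs_lin4; try rewrite Rabs_Ropp; try apply Hb; auto | lra]. }
  assert (X = mmul (minv g) (mmul (mmul g (mmul X (minv g))) g)) as ->.
  { rewrite <- !mmul_assoc, minv_l, mmul_I_l by auto. rewrite mmul_assoc, minv_l, mmul_I_r by auto. auto. }
  rewrite Hgam, mmul_I_l, minv_l; auto.
Qed.
End Frame.


Lemma conjT_entries X s : SL2 X -> mmul (mmul X (transl s)) (minv X) =
  Mat (1 - s * ma X * mc X) (s * ma X ^ 2) (- s * mc X ^ 2) (1 + s * ma X * mc X).
Proof. unfold SL2; dmat; intro H; f_equal; lra. Qed.

Lemma pow4_bounds n : 0 < (/4)^(S n) <= /4.
Proof.
  induction n; simpl in *. lra.
  split. nra. nra.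
Qed.

Section Shimizu.
Variable G : mat -> Prop.
Hypothesis Gmul : forall X Y, G X -> G Y -> G (mmul X Y).
Hypothesis Ginv : forall X, G X -> G (minv X).
Hypothesis GSL : forall X, G X -> SL2 X.
Variable s : R.
Hypothesis Hs : 0 < s.
Hypothesis GT : G (transl s).
Hypothesis Gdisc : exists d, 0 < d /\ forall X, G X -> mdist X mI < d -> X = mI.

Fixpoint sq (gm : mat) (n : nat) : mat :=
  match n with O => gm | S k => mmul (mmul (sq gm k) (transl s)) (minv (sq gm k)) end.

Lemma shimizu gm : G gm -> mc gm <> 0 -> /4 < Rabs (s * mc gm).
Proof.
  intros Hgm Hc. apply Rnot_le_lt. intro Hsm.
  set (A := Rabs (ma gm) + 1).
  assert (HA : 1 <= A) by (unfold A; pose proof (Rabs_pos (ma gm)); lra).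
  assert (Inv : forall n, G (sq gm n) /\ mc (sq gm n) <> 0 /\
     Rabs (s * mc (sq gm n)) <= (/4)^(S n) /\ Rabs (ma (sq gm n)) <= 2*A).
  { induction n as [|n IH].
    - simpl sq. split; [auto|split; [auto|split]].
      + simpl. lra.
      + unfold A. pose proof (Rabs_pos (ma gm)). lra.
    - destruct IH as [G1 [C1 [S1 A1]]].
      pose proof (pow4_bounds n) as [P1 P2].
      assert (Gn : G (sq gm (S n))) by (cbn [sq]; apply Gmul; [apply Gmul|apply Ginv]; auto).
      split; [exact Gn|].
      cbn [sq]. rewrite (conjT_entries _ _ (GSL _ G1)). cbn [ma mc].
      set (a := ma (sq gm n)) in *. set (c := mc (sq gm n)) in *.
      split; [|split].
      + intro H. apply C1. assert (c^2 = 0) by (apply (Rmult_eq_reg_l (-s)); lra).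
        nra.
      + replace (s * (- s * c ^ 2)) with (- ((s*c) * (s*c))) by ring.
        rewrite Rabs_Ropp, Rabs_mult. change ((/4)^(S (S n))) with (/4 * (/4)^(S n)).
        pose proof (Rabs_pos (s*c)). nra.
      + replace (1 - s * a * c) with (1 - a * (s*c)) by ring.
        pose proof (Rabs_triang 1 (- (a*(s*c)))). rewrite Rabs_Ropp, Rabs_mult, Rabs_R1 in H.
        pose proof (Rabs_pos (s*c)). pose proof (Rabs_pos a).
        assert (Rabs a * Rabs (s*c) <= 2*A*/4) by nra. unfold Rminus. lra. }
  destruct Gdisc as [d [Hd Hdisc]].
  set (K := s*(2*A)*(2*A+1) + 2*A*s + 2*A + 1 + /s + 1).
  assert (HK : 0 < K) by (unfold K; assert (0 < /s) by (apply Rinv_0_lt_compat; auto); nra).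
  destruct (pow_lt_1_zero (/4) ltac:(rewrite Rabs_pos_eq; lra) (d / K) ltac:(apply Rdiv_lt_0_compat; auto))
    as [N HN].
  specialize (HN (S N) ltac:(lia)). rewrite Rabs_pos_eq in HN by (left; apply pow4_bounds).
  set (r := (/4)^(S N)) in *.
  pose proof (pow4_bounds N) as [R1 R2]. fold r in R1, R2.
  destruct (Inv N) as [G1 [C1 [S1 A1]]]. fold r in S1.
  destruct (Inv (S N)) as [G2 [C2 [S2 A2]]].
  assert (S2' : Rabs (s * mc (sq gm (S N))) <= r) by (change ((/4)^(S (S N))) with (/4 * r) in S2; lra).
  assert (Ha1 : Rabs (ma (sq gm (S N)) - 1) <= 2*A*r).
  { cbn [sq]. rewrite (conjT_entries _ _ (GSL _ G1)). cbn [ma].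
    replace (1 - s * ma (sq gm N) * mc (sq gm N) - 1) with (- (ma (sq gm N) * (s * mc (sq gm N)))) by ring.
    rewrite Rabs_Ropp, Rabs_mult. apply Rmult_le_compat; auto using Rabs_pos. }
  set (X := mmul (sq gm (S (S N))) (minv (transl s))).
  destruct (Inv (S (S N))) as [G3 _].
  assert (GX : G X) by (apply Gmul; [|apply Ginv]; auto).
  assert (Hrd : K * r < d).
  { apply (Rmult_lt_compat_l K) in HN; auto. unfold Rdiv in HN.
    rewrite <- Rmult_assoc, (Rmult_comm K d), Rmult_assoc, Rinv_r, Rmult_1_r in HN by lra. lra. }
  assert (Hsi0 : 0 < /s) by (apply Rinv_0_lt_compat; auto).
  assert (Q1 : 0 <= s*(2*A)*(2*A+1)) by (apply Rmult_le_pos; [apply Rmult_le_pos|]; lra).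
  assert (Q2 : 0 <= 2*A*s) by (apply Rmult_le_pos; lra).
  assert (KA1 : 2*A <= K) by (unfold K; lra).
  assert (KA2 : s*(2*A*(2*A+1)) + s*(2*A) <= K) by (unfold K; lra).
  assert (KA3 : /s <= K) by (unfold K; lra).
  assert (KA4 : 1 + 2*A <= K) by (unfold K; lra).
  assert (X = mI).
  { apply Hdisc; auto.
    unfold X. cbn [sq]. rewrite (conjT_entries _ _ (GSL _ G2)).
    set (a := ma (sq gm (S N))) in *. set (c := mc (sq gm (S N))) in *.
    unfold mmul, minv, transl, mI; cbn [ma mb mc md].
    assert (Hsi : 0 < /s) by (apply Rinv_0_lt_compat; auto).
    pose proof (Rabs_pos (s*c)). pose proof (Rabs_pos a). pose proof (Rabs_pos (a-1)).
    assert (Haa: Rabs a <= 2*A) by auto.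
    apply mdist_lt; cbn [ma mb mc md].
    - replace ((1 - s * a * c) * 1 + s * a ^ 2 * - 0 - 1) with (- (a * (s*c))) by ring.
      rewrite Rabs_Ropp, Rabs_mult.
      assert (Rabs a * Rabs (s*c) <= 2*A*r) by nra.
      assert (2*A*r <= K*r) by (apply Rmult_le_compat_r; lra). lra.
    - replace ((1 - s * a * c) * - s + s * a ^ 2 * 1 - 0) with
        (s * ((a-1)*(a+1)) + s * (a * (s*c))) by ring.
      pose proof (Rabs_triang (s * ((a-1)*(a+1))) (s * (a * (s*c)))) as Tri.
      rewrite (Rabs_mult s ((a-1)*(a+1))), (Rabs_mult s (a*(s*c))), (Rabs_mult (a-1)), (Rabs_mult a (s*c)), (Rabs_pos_eq s) in Tri by lra.
      pose proof (Rabs_triang a 1) as Tri2. rewrite Rabs_R1 in Tri2.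
      pose proof (Rabs_pos (a+1)).
      assert (Rabs (a-1) * Rabs (a+1) <= 2*A*r*(2*A+1)) by (apply Rmult_le_compat; auto; lra).
      assert (Rabs a * Rabs (s*c) <= 2*A*r) by nra.
      assert (s * (Rabs (a - 1) * Rabs (a + 1)) + s * (Rabs a * Rabs (s * c)) <= s*(2*A*r*(2*A+1)) + s*(2*A*r)) by nra.
      assert (s*(2*A*r*(2*A+1)) + s*(2*A*r) <= K*r) by (replace (s*(2*A*r*(2*A+1)) + s*(2*A*r)) with ((s*(2*A*(2*A+1)) + s*(2*A))*r) by ring; apply Rmult_le_compat_r; lra). lra.
    - replace (- s * c ^ 2 * 1 + (1 + s * a * c) * - 0 - 0) with (- (/s * ((s*c)*(s*c)))) by (field; lra).
      rewrite Rabs_Ropp, (Rabs_mult (/s)), (Rabs_mult (s*c) (s*c)), (Rabs_pos_eq (/s)) by lra.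
      assert (Rabs (s*c) * Rabs (s*c) <= r) by nra.
      assert (/s * (Rabs (s*c) * Rabs (s*c)) <= /s * r) by nra.
      assert (/s * r <= K*r) by (apply Rmult_le_compat_r; lra). lra.
    - replace (- s * c ^ 2 * - s + (1 + s * a * c) * 1 - 1) with ((s*c)*(s*c) + a*(s*c)) by ring.
      pose proof (Rabs_triang ((s*c)*(s*c)) (a*(s*c))) as Tri. rewrite (Rabs_mult (s*c) (s*c)), (Rabs_mult a (s*c)) in Tri.
      assert (Rabs (s*c) * Rabs (s*c) <= r) by nra.
      assert (Rabs a * Rabs (s*c) <= 2*A*r) by nra.
      assert (r + 2*A*r <= K*r) by (replace (r + 2*A*r) with ((1+2*A)*r) by ring; apply Rmult_le_compat_r; lra). lra. }
  assert (HmcX : mc X = 0) by (rewrite H; reflexivity).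
  unfold X in HmcX. cbn [sq] in HmcX. rewrite (conjT_entries _ _ (GSL _ G2)) in HmcX.
  unfold mmul, minv, transl in HmcX; cbn [ma mb mc md] in HmcX.
  apply C2. set (c := mc (sq gm (S N))) in *. assert (s * c^2 = 0) by lra.
  assert (c^2 = 0) by (apply (Rmult_eq_reg_l s); lra). nra.
Qed.
End Shimizu.


Section Periodic.
Variable G : mat -> Prop.
Hypothesis Gmul : forall X Y, G X -> G Y -> G (mmul X Y).
Hypothesis Ginv : forall X, G X -> G (minv X).
Hypothesis GSL : forall X, G X -> SL2 X.
Hypothesis GnegI : G mnegI.
Variable s : R.
Hypothesis Hs : 0 < s.
Hypothesis GT : G (transl s).

Lemma G_I : G mI.
Proof. rewrite <- (minv_r (transl s)) by apply SL2_transl. apply Gmul; auto. Qed.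

Lemma G_transl_n n : G (transl (INR n * s)).
Proof.
  induction n.
  - simpl. replace (transl (0 * s)) with mI. apply G_I. unfold transl, mI; f_equal; ring.
  - replace (transl (INR (S n) * s)) with (mmul (transl s) (transl (INR n * s))).
    apply Gmul; auto. rewrite S_INR. unfold transl, mmul; simpl; f_equal; ring.
Qed.

Lemma periodic_exists gm K : G gm -> mc gm <> 0 -> 0 < K ->
  exists h P L, G h /\ SL2 P /\ 0 < L /\ mmul h P = mmul P (a_t L) /\
    mc P <> 0 /\ mc P ^ 2 + md P ^ 2 <= / K.
Proof.
  intros Hgm Hc HK.
  assert (exists gm', G gm' /\ 0 < mc gm') as [g1 [Hg1 Hc1]].
  { destruct (Rlt_or_le 0 (mc gm)). exists gm; auto.
    exists (mmul mnegI gm). split. apply Gmul; auto. unfold mmul, mnegI; simpl. lra. }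
  clear gm Hgm Hc.
  pose proof (GSL _ Hg1) as Hdet1. unfold SL2, mdet in Hdet1.
  destruct g1 as [a b c d]; simpl in *.
  destruct (INR_archimed (s*c) (2*c*K + 3 + Rabs a + Rabs d) ltac:(nra)) as [n Hn].
  set (h := mmul (transl (INR n * s)) (Mat a b c d)).
  assert (Gh : G h) by (apply Gmul; auto; apply G_transl_n).
  set (A := a + INR n * s * c). set (B := b + INR n * s * d).
  assert (Eh : h = Mat A B c d) by (unfold h, A, B, transl, mmul; simpl; f_equal; ring).
  assert (HdetAB : A * d - B * c = 1) by (unfold A, B; lra).
  set (tau := A + d).
  assert (Htau : tau >= 2*c*K + 3).
  { unfold tau, A. pose proof (Rle_abs a). pose proof (Rle_abs d).
    pose proof (Rabs_Ropp a). pose proof (Rabs_Ropp d).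
    pose proof (Rle_abs (-a)). pose proof (Rle_abs (-d)). lra. }
  assert (Htau3 : 3 <= tau) by (assert (0 <= c*K) by (apply Rmult_le_pos; lra); lra).
  set (S := sqrt (tau^2 - 4)).
  assert (HS2 : S * S = tau^2 - 4) by (unfold S; apply sqrt_sqrt; nra).
  assert (HS0 : 0 <= S) by (unfold S; apply sqrt_pos).
  assert (HSge : S >= tau - 2) by nra.
  set (lam := (tau + S)/2). set (mu := (tau - S)/2).
  assert (Hlm : lam * mu = 1) by (unfold lam, mu; nra).
  assert (Hlam1 : 1 < lam) by (unfold lam; lra).
  assert (Hlmd : lam - mu = S) by (unfold lam, mu; field).
  assert (Hlq : lam^2 = tau*lam - 1) by (unfold lam; nra).
  assert (Hmq : mu^2 = tau*mu - 1) by (unfold mu; nra).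
  assert (HcS : 0 < c * S) by nra.
  set (al := / sqrt (c * S)).
  assert (Hsq : 0 < sqrt (c*S)) by (apply sqrt_lt_R0; auto).
  assert (Hal : al * al = / (c*S)).
  { unfold al. rewrite <- Rinv_mult. f_equal. apply sqrt_sqrt. lra. }
  assert (Hal0 : 0 < al) by (unfold al; apply Rinv_0_lt_compat; auto).
  set (P := Mat (al*(lam - d)) (al*(mu - d)) (al*c) (al*c)).
  exists h, P, (2 * ln lam). split; [auto|]. split; [|split; [|split; [|split]]].
  - unfold SL2, mdet, P; simpl.
    replace (al * (lam - d) * (al * c) - al * (mu - d) * (al * c)) with ((al*al) * (c * (lam - mu))) by ring.
    rewrite Hal, Hlmd. field. lra.
  - assert (0 < ln lam) by (rewrite <- ln_1; apply ln_increasing; lra). lra.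
  - rewrite Eh. unfold P, mmul, a_t; simpl.
    replace (2 * ln lam / 2) with (ln lam) by field.
    replace (- (2 * ln lam) / 2) with (- ln lam) by field.
    rewrite exp_Ropp, exp_ln by lra.
    assert (Hmu : / lam = mu) by (field_simplify_eq; lra).
    rewrite Hmu. unfold tau in Hlq, Hmq.
    f_equal.
    + apply Rminus_diag_uniq.
      transitivity (al * (- (lam^2 - (A + d) * lam + 1) - (A * d - B * c - 1))). ring.
      rewrite Hlq, HdetAB. ring.
    + apply Rminus_diag_uniq.
      transitivity (al * (- (mu^2 - (A + d) * mu + 1) - (A * d - B * c - 1))). ring.
      rewrite Hmq, HdetAB. ring.
    + ring.
    + ring.
  - unfold P; simpl. nra.
  - assert (E : mc P ^ 2 + md P ^ 2 = 2*c/S).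
    { unfold P; simpl. transitivity (2*c*(c*(al*al))). ring. rewrite Hal. field. lra. }
    match goal with |- ?x <= _ => replace x with (2*c/S) by (rewrite <- E; ring) end.
    assert (HcK : 0 < 2*c*K) by (apply Rmult_lt_0_compat; lra).
    unfold Rdiv. apply Rle_trans with (2*c * /(2*c*K)).
    apply Rmult_le_compat_l; [lra|]. apply Rinv_le_contravar; [lra|lra].
    right; field; lra.
Qed.
End Periodic.


Lemma conjT_g g sg : SL2 g -> mmul g (mmul (transl sg) (minv g)) =
  Mat (1 - sg * ma g * mc g) (sg * ma g ^ 2) (- sg * mc g ^ 2) (1 + sg * ma g * mc g).
Proof. unfold SL2; dmat; intro H; f_equal; lra. Qed.

Lemma sign_choice x : x <> 0 -> exists sg, (sg = 1 \/ sg = -1) /\ Rabs x = sg * x.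
Proof.
  intro H. destruct (Rlt_or_le 0 x).
  - exists 1; split; auto. rewrite Rabs_pos_eq; lra.
  - exists (-1); split; auto. rewrite Rabs_left; lra.
Qed.

Lemma parabolic_form p : SL2 p -> parabolic p ->
  exists g e sg, SL2 g /\ (e = 1 \/ e = -1) /\ (sg = 1 \/ sg = -1) /\
    mmul (Mat e 0 0 e) (mmul g (mmul (transl sg) (minv g))) = p.
Proof.
  intros Hdet [Hn1 [Hn2 Htr]]. unfold SL2, mdet in Hdet.
  destruct p as [a b c d]; simpl in *.
  assert (He : exists e, (e = 1 \/ e = -1) /\ a + d = 2 * e).
  { assert ((a + d - 2) * (a + d + 2) = 0) by nra.
    apply Rmult_integral in H as [H|H]; [exists 1 | exists (-1)]; split; auto; lra. }
  destruct He as [e [He Hae]].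
  assert (Hee : e * e = 1) by (destruct He; subst; lra).
  assert (Hbc : b * c = - (e*a - 1)^2).
  { assert (d = 2*e - a) by lra. subst d. nra. }
  destruct (Req_dec b 0) as [Hb|Hb].
  - subst b. assert (Hea : e * a = 1) by nra.
    assert (Hc : c <> 0).
    { intro. subst c. destruct He; subst e.
      - apply Hn1. unfold mI. f_equal; lra.
      - apply Hn2. unfold mnegI. f_equal; lra. }
    assert (Hec : e * c <> 0) by (intro; apply Hc; nra).
    destruct (sign_choice (e*c) Hec) as [sg0 [Hsg0 Habs]].
    set (sg := - sg0). set (v2 := sqrt (Rabs (e*c))).
    assert (Hv2sq : v2 * v2 = sg0 * (e*c)) by (unfold v2; rewrite sqrt_sqrt, Habs; auto; apply Rabs_pos).
    assert (Hv2 : 0 < v2) by (unfold v2; apply sqrt_lt_R0; apply Rabs_pos_lt; auto).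
    exists (Mat 0 (- / v2) v2 0), e, sg.
    split. { unfold SL2, mdet; simpl. field. lra. }
    split; auto. split. { unfold sg; destruct Hsg0; subst; lra. }
    rewrite conjT_g by (unfold SL2, mdet; simpl; field; lra). cbn [ma mb mc md].
    unfold mmul; cbn [ma mb mc md]. assert (Hs2 : sg0 * sg0 = 1) by (destruct Hsg0; subst; lra).
    assert (Ha : a = e) by (transitivity ((e*e)*a); [rewrite Hee; ring | rewrite Rmult_assoc, Hea; ring]).
    f_equal.
    + transitivity e; [ring | auto].
    + ring.
    + transitivity (e * sg0 * (v2*v2)); [unfold sg; ring|]. rewrite Hv2sq.
      transitivity ((e*e)*(sg0*sg0)*c); [ring|]. rewrite Hee, Hs2; ring.
    + transitivity e; [ring | lra].
  - assert (Heb : e * b <> 0) by (intro; apply Hb; nra).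
    destruct (sign_choice (e*b) Heb) as [sg [Hsg Habs]].
    assert (Hs2 : sg * sg = 1) by (destruct Hsg; subst; lra).
    set (v1 := sqrt (Rabs (e*b))).
    assert (Hv1sq : v1 * v1 = sg * (e*b)) by (unfold v1; rewrite sqrt_sqrt, Habs; auto; apply Rabs_pos).
    assert (Hv1 : 0 < v1) by (unfold v1; apply sqrt_lt_R0; apply Rabs_pos_lt; auto).
    set (v2 := - sg * (e*a - 1) / v1).
    exists (Mat v1 0 v2 (/ v1)), e, sg.
    split. { unfold SL2, mdet; simpl. field. lra. }
    split; auto. split; auto.
    rewrite conjT_g by (unfold SL2, mdet; simpl; field; lra). cbn [ma mb mc md].
    assert (Hv12 : sg * v1 * v2 = 1 - e * a).
    { unfold v2. transitivity ((sg*sg)*(-(e*a-1))). field; lra. rewrite Hs2; ring. }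
    assert (He0 : e <> 0) by (destruct He; lra).
    assert (Hsg0 : sg <> 0) by (destruct Hsg; lra).
    unfold mmul; cbn [ma mb mc md]. f_equal.
    + transitivity (e*(1 - sg*v1*v2)); [ring|]. rewrite Hv12.
      transitivity ((e*e)*a); [ring|]. rewrite Hee; ring.
    + transitivity (e*sg*(v1*v1)); [ring|]. rewrite Hv1sq.
      transitivity ((e*e)*(sg*sg)*b); [ring|]. rewrite Hee, Hs2; ring.
    + transitivity (- e * sg * (v2 * v2)); [ring|]. unfold v2.
      transitivity (- e * (sg*sg) * sg * (e*a - 1)^2 / (v1 * v1)); [field; lra|].
      rewrite Hv1sq, Hs2. replace ((e*a-1)^2) with (-(b*c)) by lra. field. split; auto.
    + transitivity (e*(1+sg*v1*v2)); [ring|]. rewrite Hv12.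
      transitivity (2*e - (e*e)*a); [ring|]. rewrite Hee. lra.
Qed.


Section Main.
Variable Gam : mat -> Prop.
Hypothesis HG : torsion_free_fuchsian Gam.

Lemma frame_of_parabolic p : Gam p -> parabolic p ->
  exists g, SL2 g /\ Gp Gam g (transl 1) /\
    forall x y, fixes_bd p x y -> ma g * y - mc g * x = 0.
Proof.
  intros Hp Hpar. pose proof (fu_SL2 _ HG _ Hp) as Hdet.
  destruct (parabolic_form p Hdet Hpar) as [g [e [sg [Hg [He [Hsg Hpe]]]]]].
  exists g. split; auto. split.
  - assert (Gp Gam g (transl sg)).
    { unfold Gp. assert (E : mmul g (mmul (transl sg) (minv g)) = mmul (Mat e 0 0 e) p).
      { rewrite <- Hpe, <- (mmul_assoc (Mat e 0 0 e) (Mat e 0 0 e)). replace (mmul (Mat e 0 0 e) (Mat e 0 0 e)) with mI.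
        rewrite mmul_I_l; auto. unfold mmul, mI; simpl; destruct He; subst; f_equal; ring. }
      rewrite E. destruct He; subst e.
      - replace (Mat 1 0 0 1) with mI by reflexivity. rewrite mmul_I_l; auto.
      - apply (fu_mul _ HG); auto. apply (fu_negI _ HG). }
    destruct Hsg; subst sg; auto.
    replace (transl 1) with (minv (transl (-1))) by (unfold minv, transl; simpl; f_equal; ring).
    apply (Gp_inv Gam HG g); auto.
  - intros x y Hf. unfold fixes_bd in Hf. rewrite <- Hpe, conjT_g in Hf by auto.
    unfold mmul in Hf; cbn [ma mb mc md] in Hf.
    assert (Hk : e*sg*((ma g*y - mc g*x)*(ma g*y - mc g*x)) = 0) by (rewrite <- Hf; ring).
    assert (e*sg <> 0) by (destruct He, Hsg; subst; lra).
    apply Rmult_integral in Hk as [Hk|Hk]. contradiction.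
    apply Rmult_integral in Hk as [Hk|Hk]; auto.
Qed.

Lemma nonelem_witness g : ~ elementary Gam -> SL2 g ->
  exists gam, Gam gam /\ mc (mmul (minv g) (mmul gam g)) <> 0.
Proof.
  intros Hne Hg. apply Classical_Prop.NNPP. intro Hall. apply Hne.
  exists (cons (Bd (ma g) (mc g)) nil). split; [discriminate|]. split.
  - constructor; [|constructor]. simpl. intros [H1 H2]. unfold SL2, mdet in Hg.
    rewrite H1, H2 in Hg. lra.
  - intros gam z Hgam Hz. destruct Hz as [Hz|[]]. subst z.
    exists (Bd (ma g) (mc g)). split; [left; auto|].
    assert (H : mc (mmul (minv g) (mmul gam g)) = 0).
    { apply Classical_Prop.NNPP. intro. apply Hall. exists gam; auto. }
    destruct g, gam; unfold mmul, minv, act, same_hpt in *; simpl in *. lra.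
Qed.

Fixpoint powr (H : mat) (k : nat) : mat :=
  match k with O => mI | S j => mmul (powr H j) (minv H) end.

Lemma nw_of_periodic H w L : Gam H -> SL2 w -> 0 < L -> mmul H w = gflow L w ->
  nonwandering Gam w.
Proof.
  intros HH Hw HL Hper. split; auto.
  intros eps T Heps.
  assert (Hk : forall k, Gam (powr H k) /\ mmul (powr H k) (gflow (INR k * L) w) = w).
  { induction k as [|k [IH1 IH2]].
    - simpl. split. apply (fu_one _ HG). unfold gflow.
      replace (0 * L) with 0 by ring. rewrite mmul_I_l.
      replace (a_t 0) with mI. apply mmul_I_r. unfold a_t, mI; f_equal; rewrite <- ?exp_0; f_equal; field.
    - simpl powr. split. apply (fu_mul _ HG); auto. apply (fu_inv _ HG); auto.
      rewrite S_INR. unfold gflow in *.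
      replace ((INR k + 1) * L) with (L + INR k * L) by ring.
      rewrite a_t_add, <- (mmul_assoc w (a_t L)), <- Hper.
      rewrite mmul_assoc, (mmul_assoc H w), <- (mmul_assoc (minv H) H), minv_l, mmul_I_l.
      auto. apply (fu_SL2 _ HG); auto. }
  destruct (INR_archimed L (Rmax T 0) HL) as [k Hkk].
  destruct (Hk k) as [H1 H2].
  exists (INR k * L), w, (powr H k). split. pose proof (Rmax_l T 0); lra.
  split; auto. split; auto. split.
  - unfold mdist. rewrite !Rminus_diag, Rabs_R0, !Rmax_left; lra.
  - rewrite H2. unfold mdist. rewrite !Rminus_diag, Rabs_R0, !Rmax_left; lra.
Qed.

Lemma min_tau g : SL2 g -> Gp Gam g (transl 1) ->
  exists tau, 0 < tau /\ Gp Gam g (transl tau) /\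
    forall s, 0 < s < tau -> ~ Gp Gam g (transl s).
Proof.
  intros Hg H1.
  destruct (Gp_discrete Gam HG g Hg) as [d [Hd Hdisc]].
  assert (Sep : forall s1 s2, Gp Gam g (transl s1) -> Gp Gam g (transl s2) -> Rabs (s1 - s2) < d -> s1 = s2).
  { intros s1 s2 G1 G2 Hlt.
    assert (Gp Gam g (transl (s1 - s2))).
    { replace (transl (s1 - s2)) with (mmul (transl s1) (minv (transl s2))).
      apply Gp_mul; auto. apply Gp_inv; auto.
      unfold mmul, minv, transl; simpl; f_equal; ring. }
    apply Hdisc in H. unfold transl, mI in H. injection H; lra.
    apply mdist_lt; unfold transl, mI; simpl; rewrite ?Rminus_diag, ?Rabs_R0; auto.
    rewrite Rminus_0_r; auto. }
  set (E := fun x => exists s, x = - s /\ 0 < s /\ Gp Gam g (transl s)).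
  assert (Hb : bound E) by (exists 0; intros x [s [-> [Hs _]]]; lra).
  assert (Hne : exists x, E x) by (exists (-1); exists 1; split; [ring|split; [lra|auto]]).
  destruct (completeness E Hb Hne) as [m [Hub Hlub]].
  assert (Hex : exists s, 0 < s /\ Gp Gam g (transl s) /\ s < - m + d).
  { apply Classical_Prop.NNPP. intro Hn.
    assert (m <= m - d).
    { apply Hlub. intros x [s [-> [Hs Gs]]].
      destruct (Rlt_or_le s (-m + d)). exfalso; apply Hn; exists s; auto. lra. }
    lra. }
  destruct Hex as [tau [Ht [Gt Htl]]].
  exists tau. split; auto. split; auto.
  intros s [Hs0 Hst] Gs.
  assert (- s <= m) by (apply Hub; exists s; auto).
  assert (s = tau). { apply Sep; auto. rewrite Rabs_left; lra. } lra.
Qed.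
End Main.


Lemma bottom_close g X w eps : mdist X w < eps ->
  Rabs (mc (mmul (minv g) X) - mc (mmul (minv g) w)) <= (Rabs (ma g) + Rabs (mc g)) * eps /\
  Rabs (md (mmul (minv g) X) - md (mmul (minv g) w)) <= (Rabs (ma g) + Rabs (mc g)) * eps.
Proof.
  intro H. apply mdist_comp in H as [H1 [H2 [H3 H4]]].
  unfold mmul, minv; simpl. split.
  - replace (- mc g * ma X + ma g * mc X - (- mc g * ma w + ma g * mc w)) with
      ((- mc g) * (ma X - ma w) + ma g * (mc X - mc w)) by ring.
    eapply Rle_trans; [apply Rabs_triang|]. rewrite !Rabs_mult, Rabs_Ropp.
    pose proof (Rabs_pos (ma g)); pose proof (Rabs_pos (mc g)).
    assert (Rabs (mc g) * Rabs (ma X - ma w) <= Rabs (mc g) * eps) by (apply Rmult_le_compat_l; lra).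
    assert (Rabs (ma g) * Rabs (mc X - mc w) <= Rabs (ma g) * eps) by (apply Rmult_le_compat_l; lra).
    lra.
  - replace (- mc g * mb X + ma g * md X - (- mc g * mb w + ma g * md w)) with
      ((- mc g) * (mb X - mb w) + ma g * (md X - md w)) by ring.
    eapply Rle_trans; [apply Rabs_triang|]. rewrite !Rabs_mult, Rabs_Ropp.
    pose proof (Rabs_pos (ma g)); pose proof (Rabs_pos (mc g)).
    assert (Rabs (mc g) * Rabs (mb X - mb w) <= Rabs (mc g) * eps) by (apply Rmult_le_compat_l; lra).
    assert (Rabs (ma g) * Rabs (md X - md w) <= Rabs (ma g) * eps) by (apply Rmult_le_compat_l; lra).
    lra.
Qed.

Section Main2.
Variable Gam : mat -> Prop.
Hypothesis HG : torsion_free_fuchsian Gam.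
Hypothesis Hne : ~ elementary Gam.

Lemma nw_vector g s K : SL2 g -> 0 < s -> Gp Gam g (transl s) -> 0 < K ->
  exists w, nonwandering Gam w /\ mc (mmul (minv g) w) <> 0 /\
    mc (mmul (minv g) w) ^ 2 + md (mmul (minv g) w) ^ 2 <= / K.
Proof.
  intros Hg Hs GT HK.
  destruct (nonelem_witness Gam g Hne Hg) as [gam [Hgam Hc]].
  destruct (periodic_exists (Gp Gam g) (Gp_mul Gam HG g Hg) (Gp_inv Gam HG g)
     (Gp_SL2 Gam HG g Hg) (Gp_negI Gam HG g Hg) s Hs GT _ K (Gp_of Gam g Hg gam Hgam) Hc HK)
    as [h [P [L [Gh [HP [HL [Hper [HcP HPK]]]]]]]].
  assert (EP : mmul (minv g) (mmul g P) = P) by (rewrite <- mmul_assoc, minv_l, mmul_I_l; auto).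
  exists (mmul g P). rewrite EP. split; auto.
  apply (nw_of_periodic Gam HG (mmul g (mmul h (minv g))) (mmul g P) L); auto.
  apply SL2_mul; auto.
  unfold gflow. rewrite !mmul_assoc. rewrite <- (mmul_assoc (minv g) g), minv_l, mmul_I_l; auto.
  rewrite Hper; auto.
Qed.

Lemma decomp g gam u t : SL2 g -> mmul (minv g) (mmul gam (gflow t u)) =
  mmul (mmul (minv g) (mmul gam g)) (mmul (mmul (minv g) u) (a_t t)).
Proof.
  intro Hg. unfold gflow. rewrite !mmul_assoc. f_equal. f_equal.
  rewrite <- (mmul_assoc g (minv g)), minv_r, mmul_I_l; auto.
Qed.

End Main2.


Theorem mainTheorem13 (Gam : mat -> Prop) (u : mat) :
  torsion_free_fuchsian Gam ->
  ~ elementary Gam ->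
  has_cusp Gam ->
  SL2 u ->
  forward_orbit_dense_in_NW Gam u ->
  cusp_recurrent Gam u.
Proof.
  intros HG Hne [p [Hp Hpar]] Hu [_ Hdens].
  split.
  - intros [q [Hq [Hqpar Hfix]]].
    destruct (frame_of_parabolic Gam HG q Hq Hqpar) as [g [Hg [GT1 Hfk]]].
    set (v := mmul (minv g) u).
    assert (Hv : SL2 v) by (apply SL2_mul; auto; apply SL2_inv; auto).
    assert (Hcv : mc v = 0).
    { pose proof (Hfk _ _ Hfix). unfold v, mmul, minv; cbn [ma mb mc md]. lra. }
    assert (Hav : 0 < Rabs (ma v)).
    { apply Rabs_pos_lt. intro H0. unfold SL2, mdet in Hv. rewrite H0, Hcv in Hv. lra. }
    set (av := Rabs (ma v)) in *.
    destruct (nw_vector Gam HG Hne g 1 (64 / (av*av)) Hg ltac:(lra) GT1 ltac:(apply Rdiv_lt_0_compat; nra))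
      as [w [Hw [Hbw Hbw2]]].
    set (be := mc (mmul (minv g) w)) in *.
    assert (Hbe : Rabs be <= av / 8).
    { assert (be*be <= av*av/64).
      { assert (/ (64 / (av * av)) = av*av/64) by (field; lra). nra. }
      pose proof (Rabs_pos be).
      assert (Rabs be * Rabs be <= (av/8)*(av/8)) by (rewrite <- Rabs_mult, Rabs_pos_eq by nra; lra).
      nra. }
    assert (Hbe0 : 0 < Rabs be) by (apply Rabs_pos_lt; auto).
    set (M := Rabs (ma g) + Rabs (mc g) + 1).
    assert (HM : 1 <= M) by (unfold M; pose proof (Rabs_pos (ma g)); pose proof (Rabs_pos (mc g)); lra).
    destruct (Hdens w Hw (Rabs be / (2*M)) ltac:(apply Rdiv_lt_0_compat; lra)) as [t [gam [Ht [Hgam Hd]]]].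
    destruct (bottom_close g _ _ _ Hd) as [B1 _].
    fold be in B1.
    assert (B1' : Rabs (mc (mmul (minv g) (mmul gam (gflow t u))) - be) <= Rabs be / 2).
    { eapply Rle_trans; [apply B1|].
      assert ((Rabs (ma g) + Rabs (mc g)) * (Rabs be / (2 * M)) <= M * (Rabs be / (2*M))).
      { apply Rmult_le_compat_r. apply Rlt_le, Rdiv_lt_0_compat; lra. unfold M; lra. }
      replace (M * (Rabs be / (2 * M))) with (Rabs be / 2) in H by (field; lra). lra. }
    rewrite (decomp g gam u t Hg) in B1'. fold v in B1'.
    set (ga := mmul (minv g) (mmul gam g)) in *.
    assert (Gga : Gp Gam g ga) by (apply Gp_of; auto).
    assert (Ec : mc (mmul ga (mmul v (a_t t))) = mc ga * ma v * exp (t/2)).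
    { unfold mmul, a_t; cbn [ma mb mc md]. rewrite Hcv. ring. }
    rewrite Ec in B1'.
    destruct (Req_dec (mc ga) 0) as [Hz|Hnz].
    + rewrite Hz in B1'. replace (0 * ma v * exp (t/2) - be) with (- be) in B1' by ring.
      rewrite Rabs_Ropp in B1'. lra.
    + pose proof (shimizu (Gp Gam g) (Gp_mul Gam HG g Hg) (Gp_inv Gam HG g)
        (Gp_SL2 Gam HG g Hg) 1 ltac:(lra) GT1 (Gp_discrete Gam HG g Hg) ga Gga Hnz) as Hsh.
      rewrite Rmult_1_l in Hsh.
      assert (He : 1 <= exp (t/2)) by (pose proof (exp_ineq1_le (t/2)); lra).
      assert (Rabs (mc ga * ma v * exp (t/2)) >= av / 4).
      { rewrite !Rabs_mult, (Rabs_pos_eq (exp (t/2))) by (left; apply exp_pos). fold av.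
        pose proof (Rabs_pos (mc ga)).
        assert (X1: /4 * av <= Rabs (mc ga) * av) by (apply Rmult_le_compat_r; lra).
        assert (X2: Rabs (mc ga) * av * 1 <= Rabs (mc ga) * av * exp (t/2))
          by (apply Rmult_le_compat_l; [apply Rmult_le_pos; lra | lra]).
        lra. }
      pose proof (Rabs_triang_inv (mc ga * ma v * exp (t / 2)) be). lra.
  -
    destruct (frame_of_parabolic Gam HG p Hp Hpar) as [g [Hg [GT1 Hfk]]].
    destruct (min_tau Gam HG g Hg GT1) as [tau [Htau [GTt Hmin]]].
    set (M := Rabs (ma g) + Rabs (mc g) + 1).
    assert (HM : 1 <= M) by (unfold M; pose proof (Rabs_pos (ma g)); pose proof (Rabs_pos (mc g)); lra).
    assert (Step : forall n : nat, exists tg : R * mat, Gam (snd tg) /\ 0 <= fst tg /\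
      INR n + 1 <= im_at_i (mmul (minv g) (mmul (snd tg) (gflow (fst tg) u)))).
    { intro n. pose proof (pos_INR n) as Hn.
      destruct (nw_vector Gam HG Hne g tau (4 * (INR n + 1)) Hg Htau GTt ltac:(lra))
        as [w [Hw [_ Hbw2]]].
      set (del := / (8 * (INR n + 1))).
      assert (Hdel : 0 < del) by (unfold del; apply Rinv_0_lt_compat; lra).
      destruct (Hdens w Hw (del / M) ltac:(apply Rdiv_lt_0_compat; lra)) as [t [gam [Ht [Hgam Hd]]]].
      exists (t, gam). cbn [fst snd]. split; auto. split; auto.
      destruct (bottom_close g _ _ _ Hd) as [B1 B2].
      assert (HMd : (Rabs (ma g) + Rabs (mc g)) * (del / M) <= del).
      { replace del with (M * (del / M)) at 2 by (field; lra).
        apply Rmult_le_compat_r. apply Rlt_le, Rdiv_lt_0_compat; lra. unfold M; lra. }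
      set (X := mmul (minv g) (mmul gam (gflow t u))) in *.
      set (c0 := mc (mmul (minv g) w)) in *. set (d0 := md (mmul (minv g) w)) in *.
      assert (HX : SL2 X).
      { unfold X. apply SL2_mul. apply SL2_inv; auto. apply SL2_mul. apply (fu_SL2 _ HG); auto.
        unfold gflow. apply SL2_mul; auto. apply SL2_a_t. }
      assert (Hc1 : Rabs (mc X - c0) <= del) by lra.
      assert (Hd1 : Rabs (md X - d0) <= del) by lra.
      assert (Hsq1 : (mc X - c0)^2 <= del^2) by (rewrite <- Rsqr_pow2, <- (Rsqr_pow2 del); apply Rsqr_le_abs_1; rewrite (Rabs_pos_eq del); lra).
      assert (Hsq2 : (md X - d0)^2 <= del^2) by (rewrite <- Rsqr_pow2, <- (Rsqr_pow2 del); apply Rsqr_le_abs_1; rewrite (Rabs_pos_eq del); lra).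
      assert (Hdel2 : 4 * del^2 <= / (2 * (INR n + 1))).
      { unfold del. replace (4 * (/ (8 * (INR n + 1)))^2) with (/ (16 * (INR n + 1) * (INR n + 1))) by (field; lra). apply Rinv_le_contravar; nra. }
      assert (Hinv4 : / (4 * (INR n + 1)) = / (2 * (INR n + 1)) / 2) by (field; lra).
      assert (Hsum : mc X ^ 2 + md X ^ 2 <= / (INR n + 1)).
      { assert (mc X ^2 <= 2 * c0^2 + 2 * (mc X - c0)^2) by (pose proof (pow2_ge_0 (mc X - 2*c0)); nra).
        assert (md X ^2 <= 2 * d0^2 + 2 * (md X - d0)^2) by (pose proof (pow2_ge_0 (md X - 2*d0)); nra).
        assert (/ (INR n + 1) = / (2 * (INR n + 1)) + / (2 * (INR n + 1))) by (field; lra).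
        lra. }
      assert (Hpos : 0 < mc X ^ 2 + md X ^ 2).
      { unfold SL2, mdet in HX. destruct (Req_dec (mc X) 0) as [E|E].
        - rewrite E in *. assert (md X <> 0) by (intro E'; rewrite E' in HX; lra). nra.
        - nra. }
      unfold im_at_i. rewrite <- (Rinv_inv (INR n + 1)).
      apply Rinv_le_contravar; auto. }
    set (f := fun n => proj1_sig (constructive_indefinite_description _ (Step n))).
    assert (Hf : forall n, Gam (snd (f n)) /\ 0 <= fst (f n) /\
      INR n + 1 <= im_at_i (mmul (minv g) (mmul (snd (f n)) (gflow (fst (f n)) u))))
      by (intro n; exact (proj2_sig (constructive_indefinite_description _ (Step n)))).
    exists (fun _ => g), (fun n => im_at_i (mmul (minv g) (mmul (snd (f n)) (gflow (fst (f n)) u)))),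
      (fun _ => tau), (fun n => fst (f n)).
    split.
    + intro n. destruct (Hf n) as [F1 [F2 F3]]. pose proof (pos_INR n).
      split; [|split].
      * unfold closed_horocycle. split; auto. split; [lra|]. split; auto.
      * auto.
      * exists (snd (f n)). split; auto.
    + intros eps Heps. destruct (INR_archimed eps tau Heps) as [N HN].
      exists N. intros n Hn. unfold R_dist, horocycle_length.
      destruct (Hf n) as [F1 [F2 F3]].
      set (y := im_at_i (mmul (minv g) (mmul (snd (f n)) (gflow (fst (f n)) u)))) in *.
      assert (HnN : INR N <= INR n) by (apply le_INR; lia).
      assert (Hy : 0 < y) by (pose proof (pos_INR n); lra).
      rewrite Rminus_0_r, Rabs_pos_eq by (apply Rlt_le, Rdiv_lt_0_compat; lra).
      apply (Rmult_lt_reg_r y); auto. unfold Rdiv. rewrite Rmult_assoc, Rinv_l, Rmult_1_r by lra.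
      assert (eps * (INR N) <= eps * y) by (apply Rmult_le_compat_l; lra). lra.
Qed.
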